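(* Let $\kappa\in\{0,1\}$ and let $\mathbb{M}_\kappa$ be the simply connected complete Riemannian surface of constant curvature $\kappa$. For parameters $l>0$ and $\varepsilon>0$ (with $l<\pi/2$ when $\kappa=1$), consider in $\mathbb{M}_\kappa$ a quadrilateral $x_0x_1zx_2$, with $z$ and $x_0$ on opposite sides of the geodesic through $x_1,x_2$, such that $d(x_0,x_1)=d(x_0,x_2)=2l$, $d(x_1,z)=d(x_2,z)=l$, and the midpoints $y_1$ of $x_0x_1$ and $y_2$ of $x_0x_2$ satisfy $d(y_1,y_2)=\varepsilon$. Then, for $\varepsilon$ small enough, the circumcenter of the triangle $x_0x_1x_2$ lies inside the triangle $y_1y_2z$.
   Context: The quadrilateral is symmetric with respect to the geodesic through $x_0$ and $z$ (the bisector of the angle at $x_0$); the side-lengths are the geodesic distances in $\mathbb{M}_\kappa$. *)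

(* Defs.v *)
(* Model spaces M_kappa, kappa in {0,1}, realised inside R^3:
   - kappa = 0 : the Euclidean plane {z = 0} with the Euclidean distance;
   - kappa = 1 : the unit sphere S^2 with the great-circle distance acos <p,q>. *)
From Stdlib Require Import Reals Lra.
Open Scope R_scope.

Record pt := mkpt { px : R ; py : R ; pz : R }.

Definition dot (p q : pt) : R := px p * px q + py p * py q + pz p * pz q.
Definition vsub (p q : pt) : pt := mkpt (px p - px q) (py p - py q) (pz p - pz q).
Definition vadd (p q : pt) : pt := mkpt (px p + px q) (py p + py q) (pz p + pz q).
Definition vscale (a : R) (p : pt) : pt := mkpt (a * px p) (a * py p) (a * pz p).
Definition cross (p q : pt) : pt :=
  mkpt (py p * pz q - pz p * py q) (pz p * px q - px p * pz q) (px p * py q - py p * px q).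

Definition inM (k : R) (p : pt) : Prop :=
  if Req_EM_T k 0 then pz p = 0 else dot p p = 1.

Definition gdist (k : R) (p q : pt) : R :=
  if Req_EM_T k 0 then sqrt (dot (vsub p q) (vsub p q)) else acos (dot p q).

Definition side (k : R) (a b p : pt) : R :=
  if Req_EM_T k 0 then pz (cross (vsub b a) (vsub p a)) else dot (cross a b) p.

Definition opposite_sides (k : R) (a b p q : pt) : Prop :=
  side k a b p * side k a b q < 0.

Definition is_midpoint (k : R) (a b m : pt) : Prop :=
  inM k m /\ gdist k a m = gdist k a b / 2 /\ gdist k m b = gdist k a b / 2.

(* o is the circumcenter of the triangle abc: the point equidistant from the
   three vertices (on the sphere, the one at distance < pi/2, i.e. not the
   antipodal point) *)
Definition is_circumcenter (k : R) (a b c o : pt) : Prop :=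
  inM k o /\ gdist k o a = gdist k o b /\ gdist k o b = gdist k o c /\
  (k <> 0 -> gdist k o a < PI / 2).

(* p lies in the (closed) geodesic triangle abc, i.e. in the convex hull of
   a, b, c (Euclidean case), resp. the spherical convex hull (cone spanned by
   a, b, c intersected with the sphere) *)
Definition in_triangle (k : R) (a b c p : pt) : Prop :=
  exists u v w : R, 0 <= u /\ 0 <= v /\ 0 <= w /\
    (k = 0 -> u + v + w = 1) /\
    p = vadd (vscale u a) (vadd (vscale v b) (vscale w c)).

(* Main.v *)
Require Import Defs.
From Stdlib Require Import Reals Lra Psatz.
Open Scope R_scope.

Lemma sq0 v0 v1 v2 : v0^2+v1^2+v2^2 = 0 -> v0=0/\v1=0/\v2=0.
Proof. intros; repeat split; nra. Qed.

Lemma pt_eq (p q : pt) : px p = px q -> py p = py q -> pz p = pz q -> p = q.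
Proof. destruct p, q; simpl; intros; subst; reflexivity. Qed.

Lemma cramer3 (p a b q : pt) : dot p a = 0 -> dot p b = 0 -> dot p q = 0 ->
  dot (cross a b) q <> 0 -> px p = 0 /\ py p = 0 /\ pz p = 0.
Proof.
  destruct p as [p0 p1 p2], a as [a0 a1 a2], b as [b0 b1 b2], q as [c0 c1 c2].
  unfold dot, cross; simpl. intros Ha Hb Hc HD.
  set (DD := (a1 * b2 - a2 * b1) * c0 + (a2 * b0 - a0 * b2) * c1 + (a0 * b1 - a1 * b0) * c2) in *.
  assert (E0 : DD * p0 = (b1*c2-b2*c1)*(p0*a0+p1*a1+p2*a2) + (c1*a2-c2*a1)*(p0*b0+p1*b1+p2*b2) + (a1*b2-a2*b1)*(p0*c0+p1*c1+p2*c2)) by (unfold DD; ring).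
  assert (E1 : DD * p1 = (b2*c0-b0*c2)*(p0*a0+p1*a1+p2*a2) + (c2*a0-c0*a2)*(p0*b0+p1*b1+p2*b2) + (a2*b0-a0*b2)*(p0*c0+p1*c1+p2*c2)) by (unfold DD; ring).
  assert (E2 : DD * p2 = (b0*c1-b1*c0)*(p0*a0+p1*a1+p2*a2) + (c0*a1-c1*a0)*(p0*b0+p1*b1+p2*b2) + (a0*b1-a1*b0)*(p0*c0+p1*c1+p2*c2)) by (unfold DD; ring).
  rewrite Ha, Hb, Hc in E0, E1, E2.
  repeat split; apply (Rmult_eq_reg_l DD); try lra; auto.
Qed.

Lemma gram (a b q : pt) : (dot (cross a b) q)^2 =
  dot a a * (dot b b * dot q q - dot b q * dot b q)
  - dot a b * (dot a b * dot q q - dot b q * dot a q)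
  + dot a q * (dot a b * dot b q - dot b b * dot a q).
Proof. destruct a, b, q; unfold dot, cross; simpl; ring. Qed.

Lemma dot_comm a b : dot a b = dot b a.
Proof. unfold dot; ring. Qed.

Lemma dot_lin (c a b d q : pt) al be :
  dot (vsub c (vadd (vscale al a) (vscale be (vadd b d)))) q =
  dot c q - al * dot a q - be * (dot b q + dot d q).
Proof. destruct c, a, b, d, q; unfold dot; simpl; ring. Qed.

Lemma solve2m m y a b : 0 < m -> 2*m*y - a - b = 0 -> y = /(2*m)*(a+b).
Proof. intros hm H. assert (a + b = 2*m*y) by lra. rewrite H0. field. lra. Qed.

Lemma mid1 (a b y : pt) m : 0 < m -> dot y y = 1 -> dot a a = 1 -> dot b b = 1 ->
  dot a b = 2*m^2-1 -> dot a y = m -> dot y b = m ->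
  y = vscale (/(2*m)) (vadd a b).
Proof.
  intros hm Hy Ha Hb Hab Hay Hyb.
  assert (I : (2*m*px y - px a - px b)^2 + (2*m*py y - py a - py b)^2 + (2*m*pz y - pz a - pz b)^2
     = 4*m^2*dot y y - 4*m*dot a y - 4*m*dot y b + dot a a + 2*dot a b + dot b b)
    by (unfold dot; ring).
  rewrite Hy, Ha, Hb, Hab, Hay, Hyb in I.
  assert (I0 : (2*m*px y - px a - px b)^2 + (2*m*py y - py a - py b)^2 + (2*m*pz y - pz a - pz b)^2 = 0) by (rewrite I; ring).
  destruct (sq0 _ _ _ I0) as [E0 [E1 E2]].
  apply pt_eq; simpl; apply solve2m; assumption.
Qed.

Lemma dot_sc (k : R) (a b c d : pt) :
  dot (vscale k (vadd a b)) (vscale k (vadd c d)) = k^2 * (dot a c + dot a d + dot b c + dot b d).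
Proof. destruct a, b, c, d; unfold dot; simpl; ring. Qed.

Lemma side_comb (a b x0 : pt) g d :
  dot (cross a b) (vadd (vscale g x0) (vscale d (vadd a b))) = g * dot (cross a b) x0.
Proof. destruct a, b, x0; unfold dot, cross; simpl; ring. Qed.

Lemma combo3 (c x0 x1 x2 : pt) al be :
  px (vsub c (vadd (vscale al x0) (vscale be (vadd x1 x2)))) = 0 ->
  py (vsub c (vadd (vscale al x0) (vscale be (vadd x1 x2)))) = 0 ->
  pz (vsub c (vadd (vscale al x0) (vscale be (vadd x1 x2)))) = 0 ->
  c = vadd (vscale al x0) (vscale be (vadd x1 x2)).
Proof. destruct c; simpl; intros; apply pt_eq; simpl; lra. Qed.

Lemma sphere_core (m E : R) (x0 x1 x2 z y1 y2 c : pt)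
  (hm0 : 0 < m) (hm1 : m < 1) (hE0 : (1+m^2)/2 < E) (hE1 : E < 1)
  (U0 : dot x0 x0 = 1) (U1 : dot x1 x1 = 1) (U2 : dot x2 x2 = 1) (Uz : dot z z = 1)
  (h01 : dot x0 x1 = 2*m^2-1) (h02 : dot x0 x2 = 2*m^2-1)
  (hz1 : dot x1 z = m) (hz2 : dot x2 z = m)
  (Uy1 : dot y1 y1 = 1) (a1 : dot x0 y1 = m) (b1 : dot y1 x1 = m)
  (Uy2 : dot y2 y2 = 1) (a2 : dot x0 y2 = m) (b2 : dot y2 x2 = m)
  (hy : dot y1 y2 = E)
  (hc1 : dot c x0 = dot c x1) (hc2 : dot c x0 = dot c x2) (hcp : 0 < dot c x0)
  (hop : dot (cross x1 x2) x0 * dot (cross x1 x2) z < 0) :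
  exists u v w, 0 <= u /\ 0 <= v /\ 0 <= w /\
    c = vadd (vscale u y1) (vadd (vscale v y2) (vscale w z)).
Proof.
  pose proof (mid1 _ _ _ _ hm0 Uy1 U0 U1 h01 a1 b1) as Y1.
  pose proof (mid1 _ _ _ _ hm0 Uy2 U0 U2 h02 a2 b2) as Y2.
  set (g := 2*m^2-1) in *.
  assert (H12 : dot x1 x2 = 1 - 4*m^2*(1-E)).
  { rewrite Y1, Y2, dot_sc in hy. rewrite (dot_comm x1 x0), U0, h01, h02 in hy.
    set (X := dot x1 x2) in *.
    assert (K : 4*m^2*((/(2*m))^2 * (1 + g + g + X)) = 1 + g + g + X) by (field; lra).
    rewrite hy in K. unfold g in K. lra. }
  set (h := 1 - 4*m^2*(1-E)) in *.
  set (D2 := 1 + h - 2*g^2).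
  assert (eD2 : D2 = 1 + h - 2*g^2) by reflexivity. clearbody D2.
  assert (hD2 : 0 < D2).
  { assert (D2 = 4*m^2*(2*(1-m^2) - (1-E))) by (rewrite eD2; unfold h, g; ring).
    rewrite H. apply Rmult_lt_0_compat; nra. }
  assert (h1h : 0 < 1 - h).
  { assert (1 - h = 4*m^2*(1-E)) by (unfold h; ring). rewrite H. apply Rmult_lt_0_compat; nra. }
  assert (hDelta : dot (cross x1 x2) x0 <> 0).
  { intro HD. pose proof (gram x1 x2 x0) as G. rewrite HD in G.
    rewrite U1, U2, U0, H12, (dot_comm x1 x0), (dot_comm x2 x0), h01, h02 in G.
    fold g in G.
    assert (G' : (1-h)*D2 = 0) by (rewrite eD2; nra). nra. }
  set (rho := dot c x0) in *.
  set (al := rho*(1+h-2*g)/D2). set (be := rho*(1-g)/D2).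
  assert (C : c = vadd (vscale al x0) (vscale be (vadd x1 x2))).
  { destruct (cramer3 (vsub c (vadd (vscale al x0) (vscale be (vadd x1 x2)))) x1 x2 x0)
      as [P0 [P1 P2]]; try assumption; try (apply combo3; assumption);
    rewrite dot_lin; rewrite ?(dot_comm x0 x1), ?(dot_comm x0 x2), ?(dot_comm x2 x1) in *;
    rewrite ?U0, ?U1, ?U2, ?h01, ?h02, ?H12; unfold al, be.
    - rewrite <- hc1; fold rho; field_simplify_eq; [rewrite eD2; ring | lra].
    - rewrite <- hc2; fold rho; field_simplify_eq; [rewrite eD2; ring | lra].
    - fold rho; field_simplify_eq; [rewrite eD2; ring | lra]. }
  set (zeta := dot z x0).
  set (ga := (zeta*(1+h) - 2*g*m)/D2). set (de := (m - g*zeta)/D2).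
  assert (Zc : z = vadd (vscale ga x0) (vscale de (vadd x1 x2))).
  { destruct (cramer3 (vsub z (vadd (vscale ga x0) (vscale de (vadd x1 x2)))) x1 x2 x0)
      as [P0 [P1 P2]]; try assumption; try (apply combo3; assumption);
    rewrite dot_lin; rewrite ?(dot_comm x0 x1), ?(dot_comm x0 x2), ?(dot_comm x2 x1) in *;
    rewrite ?U0, ?U1, ?U2, ?h01, ?h02, ?H12, ?(dot_comm z x1), ?(dot_comm z x2), ?hz1, ?hz2;
    unfold ga, de; fold zeta; field_simplify_eq; try lra; rewrite eD2; ring. }
  assert (Rel : ga*g + de*(1+h) = m).
  { unfold ga, de; field_simplify_eq; try lra; rewrite eD2; ring. }
  assert (hga : ga < 0).
  { rewrite Zc, side_comb in hop. nra. }
  assert (hal : 0 < al).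
  { unfold al. apply Rdiv_lt_0_compat; [|lra]. apply Rmult_lt_0_compat; [lra|].
    unfold h, g. nra. }
  assert (hba : 0 < 2*be - al).
  { assert (2*be - al = rho*(1-h)/D2) by (unfold al, be; field; lra).
    rewrite H. apply Rdiv_lt_0_compat; [|lra]. apply Rmult_lt_0_compat; lra. }
  clearbody al be ga de.
  assert (h1 : 0 < 1 + h) by (unfold h; nra).
  assert (hdg : 0 < 2*de - ga).
  { assert (K : (2*de - ga)*(1+h) = 2*m - ga*(4*m^2*E)) by (unfold h, g in *; nra).
    assert (0 < 2*m - ga*(4*m^2*E)).
    { assert (0 < ga*ga*(4*m^2*E)) by (apply Rmult_lt_0_compat; nra).
      assert (0 < - ga * (4*m^2*E)) by (apply Rmult_lt_0_compat; nra). lra. }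
    rewrite <- K in H. nra. }
  set (w := (2*be - al)/(2*de - ga)).
  assert (hw : 0 < w) by (apply Rdiv_lt_0_compat; lra).
  exists (m*(al - w*ga)), (m*(al - w*ga)), w.
  assert (0 <= m*(al - w*ga)).
  { apply Rlt_le, Rmult_lt_0_compat; [lra|]. assert (0 < w * (-ga)) by (apply Rmult_lt_0_compat; lra). lra. }
  split; [lra | split; [lra | split; [lra|]]].
  rewrite C, Y1, Y2, Zc. unfold w. apply pt_eq; simpl; field; lra.
Qed.

Lemma cramer2 p0 p1 A0 A1 B0 B1 : p0*A0 + p1*A1 = 0 -> p0*B0+p1*B1 = 0 ->
  A0*B1 - A1*B0 <> 0 -> p0 = 0 /\ p1 = 0.
Proof.
  intros H1 H2 H3.
  assert (E0 : (A0*B1 - A1*B0)*p0 = B1*(p0*A0+p1*A1) - A1*(p0*B0+p1*B1)) by ring.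
  assert (E1 : (A0*B1 - A1*B0)*p1 = A0*(p0*B0+p1*B1) - B0*(p0*A0+p1*A1)) by ring.
  rewrite H1, H2 in E0, E1.
  split; apply (Rmult_eq_reg_l (A0*B1 - A1*B0)); lra.
Qed.

Lemma eucl_core l e A0 A1 B0 B1 R0 R1 Q0 Q1 (hl : 0 < l) (he : 0 < e) (hel : e < l)
  (hA : A0^2 + A1^2 = 4*l^2) (hB : B0^2 + B1^2 = 4*l^2)
  (hAB : (A0-B0)^2 + (A1-B1)^2 = 4*e^2)
  (hRA : R0^2 + R1^2 = (R0-A0)^2 + (R1-A1)^2)
  (hRB : R0^2 + R1^2 = (R0-B0)^2 + (R1-B1)^2)
  (hQ : (A0-Q0)^2 + (A1-Q1)^2 = (B0-Q0)^2 + (B1-Q1)^2)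
  (hop : ((B0-A0)*(-A1) - (B1-A1)*(-A0)) * ((B0-A0)*(Q1-A1) - (B1-A1)*(Q0-A0)) < 0) :
  exists u v w, 0 <= u /\ 0 <= v /\ 0 <= w /\ u + v + w = 1 /\
    R0 = u*(A0/2) + v*(B0/2) + w*Q0 /\ R1 = u*(A1/2) + v*(B1/2) + w*Q1.
Proof.
  assert (hab : A0*B0 + A1*B1 = 4*l^2 - 2*e^2) by nra.
  set (K := 4*l^2 - e^2).
  assert (hK : 0 < K) by (unfold K; nra).
  assert (hC : A0*B1 - A1*B0 <> 0).
  { intro H0. assert (Id : (A0*B1 - A1*B0)^2 + (A0*B0+A1*B1)^2 = (A0^2+A1^2)*(B0^2+B1^2)) by ring.
    rewrite H0, hab, hA, hB in Id. assert (4*e^2*K = 0) by (unfold K; nra).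
    assert (0 < 4*e^2*K) by (apply Rmult_lt_0_compat; nra). lra. }
  set (s := l^2/K).
  destruct (cramer2 (R0 - s*(A0+B0)) (R1 - s*(A1+B1)) A0 A1 B0 B1) as [r0 r1]; auto.
  { assert (R0*A0 + R1*A1 = 2*l^2) by lra.
    assert (E : (R0 - s*(A0+B0))*A0 + (R1 - s*(A1+B1))*A1 = (R0*A0 + R1*A1) - s*((A0^2+A1^2) + (A0*B0+A1*B1))) by ring.
    rewrite E, H, hA, hab. unfold s, K. field. unfold K in hK; lra. }
  { assert (R0*B0 + R1*B1 = 2*l^2) by lra.
    assert (E : (R0 - s*(A0+B0))*B0 + (R1 - s*(A1+B1))*B1 = (R0*B0 + R1*B1) - s*((B0^2+B1^2) + (A0*B0+A1*B1))) by ring.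
    rewrite E, H, hB, hab. unfold s, K. field. unfold K in hK; lra. }
  set (sg := Q0*A0 + Q1*A1).
  assert (hqb : Q0*B0 + Q1*B1 = sg) by (unfold sg; nra).
  set (t := sg/(2*K)).
  destruct (cramer2 (Q0 - t*(A0+B0)) (Q1 - t*(A1+B1)) A0 A1 B0 B1) as [q0 q1]; auto.
  { assert (E : (Q0 - t*(A0+B0))*A0 + (Q1 - t*(A1+B1))*A1 = sg - t*((A0^2+A1^2) + (A0*B0+A1*B1))) by (unfold sg; ring).
    rewrite E, hA, hab. unfold t, K. field. unfold K in hK; lra. }
  { assert (E : (Q0 - t*(A0+B0))*B0 + (Q1 - t*(A1+B1))*B1 = (Q0*B0+Q1*B1) - t*((B0^2+B1^2) + (A0*B0+A1*B1))) by ring.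
    rewrite E, hqb, hB, hab. unfold t, K. field. unfold K in hK; lra. }
  assert (EQ0 : Q0 = t*(A0+B0)) by lra.
  assert (EQ1 : Q1 = t*(A1+B1)) by lra.
  assert (ER0 : R0 = s*(A0+B0)) by lra.
  assert (ER1 : R1 = s*(A1+B1)) by lra.
  assert (sK : s*K = l^2) by (unfold s; field; lra).
  assert (eK : K = 4*l^2 - e^2) by reflexivity.
  clearbody K.
  assert (hs1 : 1/4 < s) by nra.
  assert (hs2 : s <= 1/2) by nra.
  clearbody t s.
  assert (ht : 1/2 < t).
  { rewrite EQ0, EQ1 in hop.
    assert (E : ((B0-A0)*(-A1) - (B1-A1)*(-A0)) * ((B0-A0)*(t*(A1+B1)-A1) - (B1-A1)*(t*(A0+B0)-A0))
      = (A0*B1 - A1*B0)^2 * (1 - 2*t)) by ring.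
    rewrite E in hop. assert (0 < (A0*B1 - A1*B0)^2) by (rewrite <- Rsqr_pow2; apply Rlt_0_sqr; auto). nra. }
  set (w := (s - 1/4)/(t - 1/4)).
  assert (hw0 : 0 < w) by (apply Rdiv_lt_0_compat; lra).
  assert (hw1 : w <= 1).
  { assert (w*(t-1/4) = s - 1/4) by (unfold w; field; lra). nra. }
  exists ((1-w)/2), ((1-w)/2), w.
  repeat split; try lra.
  - rewrite ER0, EQ0; unfold w; field; lra.
  - rewrite ER1, EQ1; unfold w; field; lra.
Qed.

Lemma inM0 p : inM 0 p -> pz p = 0.
Proof. unfold inM; destruct (Req_EM_T 0 0); [auto | congruence]. Qed.
Lemma inM1 p : inM 1 p -> dot p p = 1.
Proof. unfold inM; destruct (Req_EM_T 1 0); [lra | auto]. Qed.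
Lemma gd0 p q : gdist 0 p q = sqrt (dot (vsub p q) (vsub p q)).
Proof. unfold gdist; destruct (Req_EM_T 0 0); [auto | congruence]. Qed.
Lemma gd1 p q : gdist 1 p q = acos (dot p q).
Proof. unfold gdist; destruct (Req_EM_T 1 0); [lra | auto]. Qed.
Lemma sd0 a b p : side 0 a b p = pz (cross (vsub b a) (vsub p a)).
Proof. unfold side; destruct (Req_EM_T 0 0); [auto | congruence]. Qed.
Lemma sd1 a b p : side 1 a b p = dot (cross a b) p.
Proof. unfold side; destruct (Req_EM_T 1 0); [lra | auto]. Qed.

Lemma N_nonneg p : 0 <= dot p p.
Proof. destruct p; unfold dot; simpl; nra. Qed.

Lemma sqrt_val X Y : 0 <= X -> sqrt X = Y -> X = Y^2.
Proof. intros H E. subst. rewrite pow2_sqrt; auto. Qed.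

Lemma dot_bound a b : dot a a = 1 -> dot b b = 1 -> -1 <= dot a b <= 1.
Proof. destruct a as [a0 a1 a2], b as [b0 b1 b2]; unfold dot; simpl; intros; split.
  - assert (0 <= (a0+b0)^2 + (a1+b1)^2 + (a2+b2)^2) by (repeat apply Rplus_le_le_0_compat; apply pow2_ge_0). nra.
  - assert (0 <= (a0-b0)^2 + (a1-b1)^2 + (a2-b2)^2) by (repeat apply Rplus_le_le_0_compat; apply pow2_ge_0). nra. Qed.

Lemma acos_val a b v : dot a a = 1 -> dot b b = 1 -> acos (dot a b) = v -> dot a b = cos v.
Proof. intros Ha Hb E. rewrite <- E, cos_acos; auto using dot_bound. Qed.

Lemma midE (a b y : pt) l : dot (vsub a y) (vsub a y) = l^2 -> dot (vsub y b) (vsub y b) = l^2 ->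
  dot (vsub a b) (vsub a b) = 4*l^2 -> y = vscale (/2) (vadd a b).
Proof.
  intros H1 H2 H3.
  assert (I : (2*px y - px a - px b)^2 + (2*py y - py a - py b)^2 + (2*pz y - pz a - pz b)^2
     = 2*dot (vsub a y) (vsub a y) + 2*dot (vsub y b) (vsub y b) - dot (vsub a b) (vsub a b))
    by (unfold dot, vsub; simpl; ring).
  rewrite H1, H2, H3 in I.
  assert (I0 : (2*px y - px a - px b)^2 + (2*py y - py a - py b)^2 + (2*pz y - pz a - pz b)^2 = 0) by (rewrite I; ring).
  destruct (sq0 _ _ _ I0) as [E0 [E1 E2]].
  apply pt_eq; simpl; lra.
Qed.

Lemma case0 (l : R) (hl : 0 < l) :
  exists e0 : R, 0 < e0 /\
  forall e : R, 0 < e < e0 ->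
  forall x0 x1 x2 z y1 y2 : pt,
    inM 0 x0 -> inM 0 x1 -> inM 0 x2 -> inM 0 z ->
    opposite_sides 0 x1 x2 x0 z ->
    gdist 0 x0 x1 = 2 * l -> gdist 0 x0 x2 = 2 * l ->
    gdist 0 x1 z = l -> gdist 0 x2 z = l ->
    is_midpoint 0 x0 x1 y1 -> is_midpoint 0 x0 x2 y2 ->
    gdist 0 y1 y2 = e ->
    forall c : pt, is_circumcenter 0 x0 x1 x2 c -> in_triangle 0 y1 y2 z c.
Proof.
  exists l. split; [lra|]. intros e [he hel] x0 x1 x2 z y1 y2 I0 I1 I2 Iz Hop H01 H02 H1z H2z
    [_ [M1a M1b]] [_ [M2a M2b]] Hy c [Ic [Hc1 [Hc2 _]]].
  apply inM0 in I0, I1, I2, Iz, Ic.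
  unfold opposite_sides in Hop. rewrite !sd0 in Hop.
  rewrite H01 in M1a, M1b. rewrite H02 in M2a, M2b.
  rewrite !gd0 in *.
  apply sqrt_val in H01, H02, H1z, H2z, M1a, M1b, M2a, M2b, Hy; try apply N_nonneg.
  apply sqrt_inj in Hc1, Hc2; try apply N_nonneg.
  replace ((2*l/2)^2) with (l^2) in M1a, M1b, M2a, M2b by field.
  assert (Y1 := midE _ _ _ _ M1a M1b ltac:(rewrite H01; ring)).
  assert (Y2 := midE _ _ _ _ M2a M2b ltac:(rewrite H02; ring)).
  subst y1 y2.
  destruct x0 as [p0 p1 p2], x1 as [a0 a1 a2], x2 as [b0 b1 b2], z as [q0 q1 q2], c as [r0 r1 r2].
  simpl in *. subst.
  unfold dot, vsub, vscale, vadd, cross in *; simpl in *.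
  destruct (eucl_core l e (a0-p0) (a1-p1) (b0-p0) (b1-p1) (r0-p0) (r1-p1) (q0-p0) (q1-p1))
    as [u [v [w [hu [hv [hw [hs [E0 E1]]]]]]]]; try lra; try nra.
  exists u, v, w. split; [auto|split; [auto|split; [auto|split; [intros; lra|]]]].
  assert (w = 1 - u - v) by lra. subst w.
  apply pt_eq; simpl; lra.
Qed.

Lemma case1 (l : R) (hl : 0 < l) (hl1 : l < PI / 2) :
  exists e0 : R, 0 < e0 /\
  forall e : R, 0 < e < e0 ->
  forall x0 x1 x2 z y1 y2 : pt,
    inM 1 x0 -> inM 1 x1 -> inM 1 x2 -> inM 1 z ->
    opposite_sides 1 x1 x2 x0 z ->
    gdist 1 x0 x1 = 2 * l -> gdist 1 x0 x2 = 2 * l ->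
    gdist 1 x1 z = l -> gdist 1 x2 z = l ->
    is_midpoint 1 x0 x1 y1 -> is_midpoint 1 x0 x2 y2 ->
    gdist 1 y1 y2 = e ->
    forall c : pt, is_circumcenter 1 x0 x1 x2 c -> in_triangle 1 y1 y2 z c.
Proof.
  pose proof PI_RGT_0 as hPI.
  set (m := cos l).
  assert (hm0 : 0 < m) by (apply cos_gt_0; lra).
  assert (hm1 : m < 1).
  { rewrite <- cos_0. apply cos_decreasing_1; lra. }
  assert (em : cos l = m) by reflexivity. clearbody m.
  set (E0 := (1 + m^2)/2).
  assert (hE0 : -1 < E0 < 1) by (unfold E0; split; nra).
  exists (acos E0).
  pose proof (acos_bound_lt E0 hE0) as hb.
  split; [lra|].
  intros e [he hee] x0 x1 x2 z y1 y2 I0 I1 I2 Iz Hop H01 H02 H1z H2z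
    [Iy1 [M1a M1b]] [Iy2 [M2a M2b]] Hy c [Ic [Hc1 [Hc2 Hc3]]].
  apply inM1 in I0, I1, I2, Iz, Ic, Iy1, Iy2.
  unfold opposite_sides in Hop. rewrite !sd1 in Hop.
  rewrite H01 in M1a, M1b. rewrite H02 in M2a, M2b.
  specialize (Hc3 ltac:(lra)).
  rewrite !gd1 in *.
  replace (2*l/2) with l in M1a, M1b, M2a, M2b by field.
  apply acos_val in H01, H02, H1z, H2z, M1a, M1b, M2a, M2b, Hy; auto.
  rewrite cos_2a_cos in H01, H02. rewrite em in *.
  assert (Ec : cos e < 1).
  { rewrite <- cos_0. apply cos_decreasing_1; lra. }
  assert (Ee : E0 < cos e).
  { assert (cos (acos E0) = E0) by (apply cos_acos; lra).
    rewrite <- H at 1. apply cos_decreasing_1; lra. }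
  assert (R1 : -1 <= dot c x0 <= 1) by (apply dot_bound; auto).
  assert (R2 : -1 <= dot c x1 <= 1) by (apply dot_bound; auto).
  assert (R3 : -1 <= dot c x2 <= 1) by (apply dot_bound; auto).
  assert (C1 : dot c x0 = dot c x1).
  { rewrite <- (cos_acos _ R1), <- (cos_acos _ R2), Hc1. reflexivity. }
  assert (C2 : dot c x1 = dot c x2).
  { rewrite <- (cos_acos _ R2), <- (cos_acos _ R3), Hc2. reflexivity. }
  assert (Cp : 0 < dot c x0).
  { rewrite <- (cos_acos _ R1). pose proof (acos_bound (dot c x0)). apply cos_gt_0; lra. }
  destruct (sphere_core m (cos e) x0 x1 x2 z y1 y2 c) as [u [v [w [hu [hv [hw Hc]]]]]];
    auto; try (unfold E0 in Ee; lra); try (rewrite H01; ring); try (rewrite H02; ring);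
    try (rewrite C1; auto).
  exists u, v, w. repeat split; auto. intros; lra.
Qed.

Theorem lemma13 (k l : R) (hk : k = 0 \/ k = 1) (hl : 0 < l)
  (hl1 : k = 1 -> l < PI / 2) :
  exists e0 : R, 0 < e0 /\
  forall e : R, 0 < e < e0 ->
  forall x0 x1 x2 z y1 y2 : pt,
    inM k x0 -> inM k x1 -> inM k x2 -> inM k z ->
    opposite_sides k x1 x2 x0 z ->
    gdist k x0 x1 = 2 * l -> gdist k x0 x2 = 2 * l ->
    gdist k x1 z = l -> gdist k x2 z = l ->
    is_midpoint k x0 x1 y1 -> is_midpoint k x0 x2 y2 ->
    gdist k y1 y2 = e ->
    forall c : pt, is_circumcenter k x0 x1 x2 c -> in_triangle k y1 y2 z c.
Proof.
  destruct hk as [-> | ->].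
  - apply case0; auto.
  - apply case1; auto.
Qed.
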